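(* Let $0\le r\le n$. Every operator $T=P(x,u_0,\dots,u_r)$, with $P$ a real polynomial, can be written uniquely as a finite sum $$T=p(x)+\sum_{i}p_i(x)K_{ri}+\sum_{i\le j}p_{ij}(x)K_{ri}K_{rj}+\sum_{i\le j\le k}p_{ijk}(x)K_{ri}K_{rj}K_{rk}+\cdots$$ with all indices in $\{0,\dots,r\}$, coefficients $p,p_i,p_{ij},\dots\in\mathbb R[x]$, and products taken pointwise. Moreover $T(\mathcal P_n)\subset\mathcal P_n$ if and only if every coefficient of a term of degree $\ell$ in the $K_{ri}$ lies in $\mathcal P_{\ell r-(\ell-1)n}$; that is, $p\in\mathcal P_n$, $p_i\in\mathcal P_r$, $p_{ij}\in\mathcal P_{2r-n}$, $p_{ijk}\in\mathcal P_{3r-2n}$, etc.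
   Context: Operators of order $\le r$ are identified with polynomials $P(x,u_0,\dots,u_r)$ acting on a smooth $f$ by $P[f](x)=P(x,f(x),f'(x),\dots,f^{(r)}(x))$. $\mathcal P_s$ is the space of real polynomials in $x$ of degree $\le s$, and $\mathcal P_s=\{0\}$ for $s<0$. For $0\le j\le r\le n$, $K_{rj}$ is the linear operator $K_{rj}=\sum_{k=0}^{r-j}(-1)^k\binom{n-k-j}{n-r}\frac{x^k}{k!}u_{k+j}$ (equivalently $K_{rj}=\frac{1}{(r-j)!}(n-j-xD)_{r-j}D^j$ with $D=d/dx$ and $(a-xD)_k=(-1)^k(xD-a)(xD-a+1)\cdots(xD-a+k-1)$). *)

(* Defs.v *)
From HB Require Import structures.
From mathcomp Require Import all_boot all_order all_algebra.
From mathcomp Require Import reals.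
From mathcomp Require Import mpoly.
Set Implicit Arguments. Unset Strict Implicit. Unset Printing Implicit Defensive.
Import Order.TTheory GRing.Theory Num.Theory.
Local Open Scope ring_scope.

(* Operators of order <= r: a polynomial P(x,u_0,...,u_r) is represented as a
   polynomial in the variables u_0..u_r ('X_i, i : 'I_r.+1) with coefficients
   in R[x] = {poly R}. *)
Definition operator (R : realType) (r : nat) := {mpoly {poly R}[r.+1]}.

Definition act (R : realType) (r : nat) (T : operator R r) (f : {poly R})
  : {poly R} := mmap idfun (fun i : 'I_r.+1 => f^`(i)) T.

Definition Pspace (R : realType) (s : int) (p : {poly R}) : Prop :=
  if (s < 0)%R then p = 0 else (size p <= `|s|.+1)%N.

Definition preserves (R : realType) (n r : nat) (T : operator R r) : Prop :=
  forall f : {poly R}, Pspace n%:Z f -> Pspace n%:Z (act T f).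

Definition Kop (R : realType) (n r : nat) (j : 'I_r.+1) : operator R r :=
  \sum_(k < (r - j).+1)
     @mpolyC r.+1 {poly R} (((-1) ^+ k * ('C(n - k - j, n - r))%:R / (k`!)%:R) *: ('X : {poly R}) ^+ k)
       * 'X_(inord (k + j)).

Definition Kexpand (R : realType) (n r : nat) (Q : {mpoly {poly R}[r.+1]})
  : operator R r := mmap (@mpolyC r.+1 {poly R}) (@Kop R n r) Q.

(* Main.v *)
Require Import Defs.
From HB Require Import structures.
From mathcomp Require Import all_boot all_order all_algebra.
From mathcomp Require Import reals.
From mathcomp Require Import mpoly.
From mathcomp Require Import ring lra zify.
Import Order.TTheory GRing.Theory Num.Theory.
Local Open Scope ring_scope.

Section Ext.
Context (k : nat) (A : comNzRingType) (S : nzRingType).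
Context (phi psi : {mpoly A[k]} -> S).
Hypothesis phiD : forall p q, phi (p + q) = phi p + phi q.
Hypothesis psiD : forall p q, psi (p + q) = psi p + psi q.
Hypothesis phi0 : phi 0 = 0.
Hypothesis psi0 : psi 0 = 0.
Hypothesis phiM : forall p q, phi (p * q) = phi p * phi q.
Hypothesis psiM : forall p q, psi (p * q) = psi p * psi q.
Hypothesis phi1 : phi 1 = 1.
Hypothesis psi1 : psi 1 = 1.
Hypothesis hC : forall c, phi c%:MP = psi c%:MP.
Hypothesis hX : forall i, phi 'X_i = psi 'X_i.

Lemma mpoly_ext p : phi p = psi p.
Proof.
rewrite (mpolyE p).
rewrite (big_morph phi phiD phi0) (big_morph psi psiD psi0).
apply: eq_bigr => m _.
rewrite -mul_mpolyC phiM psiM hC; congr (_ * _).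
rewrite mpolyXE_id (big_morph phi phiM phi1) (big_morph psi psiM psi1).
apply: eq_bigr => i _.
elim: (m i) => [|e IH]; first by rewrite !expr0 phi1 psi1.
by rewrite !exprS phiM psiM IH hX.
Qed.
End Ext.

Section NZ.
Context (R : realType).

Lemma poly_allroots (q : {poly R}) : (forall t, q.[t] = 0) -> q = 0.
Proof.
move=> h; apply/eqP; apply/negPn/negP => nq.
have H1 : all (root q) [seq i%:R | i <- iota 0 (size q)].
  by apply/allP => x /mapP [i _ ->]; rewrite /root h.
have H2 : uniq [seq (i%:R : R) | i <- iota 0 (size q)].
  rewrite map_inj_uniq ?iota_uniq // => i j /eqP; rewrite eqr_nat => /eqP.
  done.
have := @max_poly_roots _ q _ nq H1 H2.
by rewrite size_map size_iota ltnn.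
Qed.

Section Step.
Context (k : nat).
Definition Xh (i : 'I_k.+1) : {poly {mpoly R[k]}} :=
  match unlift ord_max i with Some j => ('X_j)%:P | None => 'X end.
Definition phiU (p : {mpoly R[k.+1]}) : {poly {mpoly R[k]}} :=
  mmap (polyC \o (@mpolyC k R)) Xh p.
Definition wid (p : {mpoly R[k]}) : {mpoly R[k.+1]} :=
  mmap (@mpolyC _ R) (fun j => 'X_(lift ord_max j)) p.
Definition psiU (q : {poly {mpoly R[k]}}) : {mpoly R[k.+1]} :=
  (map_poly wid q).['X_ord_max].
Definition vext (v : 'I_k -> R) (t : R) (i : 'I_k.+1) : R :=
  match unlift ord_max i with Some j => v j | None => t end.

Lemma phiUX i : phiU 'X_i = Xh i.
Proof. by rewrite /phiU mmapX mmap1U. Qed.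

Lemma psiUK p : psiU (phiU p) = p.
Proof.
apply: (@mpoly_ext _ _ _ (psiU \o phiU) id) => //=.
- by move=> a b; rewrite /psiU /phiU /wid !rmorphD /= hornerD.
- by rewrite /psiU /phiU /wid !rmorph0 horner0.
- by move=> a b; rewrite /psiU /phiU /wid !rmorphM /= hornerM.
- by rewrite /psiU /phiU /wid !rmorph1 /= hornerC.
- move=> c; by rewrite /psiU /phiU /wid mmapC /= map_polyC hornerC; apply: mmapC.
move=> i; rewrite /psiU /wid phiUX /Xh; case: unliftP => [j ->|->].
  by rewrite map_polyC hornerC; rewrite /= mmapX mmap1U.
by rewrite map_polyX hornerX.
Qed.

Lemma meval_phiU v t p :
  p.@[vext v t] = (map_poly (meval v) (phiU p)).[t].
Proof.
apply: (@mpoly_ext _ _ _ (meval (vext v t))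
   (fun p => (map_poly (meval v) (phiU p)).[t])) => //=.
- by move=> a b; rewrite mevalD.
- by move=> a b; rewrite /phiU !rmorphD /= hornerD.
- by rewrite meval0.
- by rewrite /phiU !rmorph0 horner0.
- by move=> a b; rewrite mevalM.
- by move=> a b; rewrite /phiU !rmorphM /= hornerM.
- by rewrite meval1.
- by rewrite /phiU !rmorph1 hornerC.
- by move=> c; rewrite mevalC /phiU mmapC /= map_polyC hornerC /= mevalC.
move=> i; rewrite mevalXU phiUX /Xh /vext; case: unliftP => [j _|_].
  by rewrite map_polyC hornerC /= mevalXU.
by rewrite map_polyX hornerX.
Qed.
End Step.

Arguments phiU {k}.
Arguments psiU {k}.
Arguments vext {k}.
Arguments psiUK {k}.
Arguments meval_phiU {k}.
Lemma mpoly_nz k (p : {mpoly R[k]}) : (forall v, p.@[v] = 0) -> p = 0.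
Proof.
elim: k p => [|k IH] p h.
  have e : p = (p.@[fun _ => 0])%:MP.
    symmetry; apply: (@mpoly_ext _ _ _ (fun p => (p.@[fun _ => 0])%:MP) id) => //=.
    - by move=> a b; rewrite mevalD raddfD.
    - by rewrite meval0.
    - by move=> a b; rewrite mevalM rmorphM.
    - by rewrite meval1.
    - by move=> c; rewrite mevalC.
    by case.
  by rewrite e h.
have hp : phiU p = 0.
  apply/polyP => d; rewrite coef0; apply: IH => v.
  have q0 : map_poly (meval v) (phiU p) = 0.
    by apply: poly_allroots => t; rewrite -meval_phiU h.
  by rewrite -coef_map q0 coef0.
by rewrite -(psiUK p) hp /psiU rmorph0 horner0.
Qed.
End NZ.

Section Bin.
Context (R : pzRingType) (N : nat).
Definition Sb t M : R := \sum_(k < M.+1) (-1) ^+ k * ('C(M - k, N) * 'C(t, k))%:R.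

Lemma Sb_rec t M : Sb t.+1 M.+1 = Sb t M.+1 - Sb t M.
Proof.
rewrite /Sb [LHS]big_ord_recl [X in _ = X - _]big_ord_recl /=.
rewrite !bin0 !muln1 !expr0 !mul1r -addrA; congr (_ + _).
rewrite -sumrB; apply: eq_bigr => k _.
rewrite /bump /= !add1n subSS binS mulnDr natrD mulrDr exprS.
by rewrite mulN1r !mulNr.
Qed.

Lemma Sb_val t M : (t <= M)%N ->
  Sb t M = (if (t <= N)%N then 'C(M - t, N - t) else 0)%:R.
Proof.
elim: t M => [|t IH] M.
  move=> _; rewrite /Sb big_ord_recl /= expr0 mul1r bin0 muln1 !subn0.
  by rewrite big1 ?addr0 // => k _; rewrite bin0n muln0 mulr0.
case: M => [//|M] ltM.
rewrite Sb_rec IH ?(ltnW ltM) // IH // .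
case: (ltngtP t N) => [ltN|gtN|eqN].
-
  have e1 : (N - t = (N - t.+1).+1)%N by rewrite subnS prednK // subn_gt0.
  have e2 : (M.+1 - t = (M - t).+1)%N by rewrite subSn.
  by rewrite e1 e2 binS natrD subSS addrC addKr.
- by rewrite subrr.
- by rewrite eqN subnn !bin0 subrr.
Qed.
End Bin.

Section Act.
Context (R : realType) (r : nat).
Implicit Types (T U : operator R r) (f : {poly R}).

Lemma actD T U f : act (T + U) f = act T f + act U f.
Proof. by rewrite /act rmorphD. Qed.
Lemma act0 f : act (0 : operator R r) f = 0.
Proof. by rewrite /act rmorph0. Qed.
Lemma actM T U f : act (T * U) f = act T f * act U f.
Proof. by rewrite /act rmorphM. Qed.
Lemma act1 f : act (1 : operator R r) f = 1.
Proof. by rewrite /act rmorph1. Qed.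
Lemma actC c f : act (c%:MP : operator R r) f = c.
Proof. by rewrite /act mmapC. Qed.
Lemma actX i f : act ('X_i : operator R r) f = f^`(i).
Proof. by rewrite /act mmapX mmap1U. Qed.
End Act.
Arguments actD {R r}.
Arguments act0 {R r}.
Arguments actM {R r}.
Arguments act1 {R r}.
Arguments actC {R r}.
Arguments actX {R r}.

Lemma ffact_split m j k : (j <= m)%N -> m ^_ (k + j) = (m ^_ j * (m - j) ^_ k)%N.
Proof.
move=> jm; elim: k => [|k IH]; first by rewrite ffactn0 muln1.
by rewrite addSn !ffactnSr IH -mulnA; congr (_ * (_ * _))%N; lia.
Qed.

Section Kop.
Context (R : realType) (n r : nat) (hrn : (r <= n)%N).
Local Notation N := (n - r)%N.

Definition wk (j k : nat) : R := (-1) ^+ k * ('C(n - k - j, n - r))%:R / (k`!)%:R.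

Lemma act_Kop (j : 'I_r.+1) f :
  act (@Kop R n r j) f = \sum_(k < (r - j).+1) (wk j k *: 'X^k) * f^`(k + j).
Proof.
rewrite /Kop (big_morph (fun T => act T f) (fun T U => actD T U f) (act0 f)).
apply: eq_bigr => k _.
rewrite actM actC actX inordK //.
have := ltn_ord k; have := ltn_ord j; lia.
Qed.

Definition cK (j m : nat) : R := \sum_(k < (r - j).+1) wk j k * (m ^_ (k + j))%:R.

Lemma act_Kop_X (j : 'I_r.+1) m :
  act (@Kop R n r j) 'X^m = cK j m *: 'X^(m - j).
Proof.
rewrite act_Kop /cK scaler_suml; apply: eq_bigr => k _.
rewrite derivnXn -scalerAl -mulr_natr mulrA -exprD.
case: (leqP (k + j) m) => h.
  have -> : (k + (m - (k + j)) = m - j)%N by lia.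
  by rewrite !mulr_natr -scalerMnl -scalerMnr.
by rewrite ffact_small // !mulr0 scaler0 scale0r.
Qed.

Lemma cK_val (j : 'I_r.+1) m : (m <= n)%N ->
  cK j m = if (j <= m)%N then
     ((m ^_ j)%:R * (if (m - j <= N)%N then 'C(n - j - (m - j), N - (m - j)) else 0)%:R)
     else 0.
Proof.
move=> mn; rewrite /cK; case: ifP => jm; last first.
  by rewrite big1 // => k _; rewrite ffact_small ?mulr0 //; lia.
rewrite -Sb_val; last lia.
rewrite /Sb mulr_sumr (big_ord_widen (n - j).+1 (fun k => wk j k * (m ^_ (k + j))%:R) (_ : (r - j).+1 <= (n - j).+1)%N); last lia.
rewrite big_mkcond /=; apply: eq_bigr => k _.
case: ifP => hk.
  rewrite ffact_split // -(bin_ffact (m - j) k) /wk.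
  have -> : (n - k - j = n - j - k)%N by lia.
  have kf : (k`!)%:R != 0 :> R by rewrite pnatr_eq0 -lt0n fact_gt0.
  by rewrite !natrM; field.
rewrite bin_small ?mul0n ?mulr0 //.
move: hk; have := ltn_ord k; have := ltn_ord j; lia.
Qed.

Lemma size_Kop_X (j : 'I_r.+1) m : (m <= n)%N ->
  (size (act (@Kop R n r j) 'X^m) <= N.+1)%N.
Proof.
move=> mn; rewrite act_Kop_X cK_val //.
case: ifP => jm; last by rewrite scale0r size_poly0.
case: ifP => hN; last by rewrite mulr0 scale0r size_poly0.
apply: leq_trans (size_scale_leq _ _) _; rewrite size_polyXn; lia.
Qed.

Lemma coef_Kop_X (j : 'I_r.+1) m : (m <= n)%N ->
  (act (@Kop R n r j) 'X^m)`_N = if m == (N + j)%N then ((N + j) ^_ j)%:R else 0.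
Proof.
move=> mn; rewrite act_Kop_X coefZ coefXn cK_val //.
case: ifP => jm; last first.
  by rewrite mul0r; case: eqP => // e; move: jm; rewrite e leq_addl.
case: eqP => [e|ne].
  by rewrite e leqnn subnn bin0 !mulr1 subnK // eqxx.
case: eqP => [e|_]; [case: ne; lia | by rewrite mulr0].
Qed.

End Kop.

Lemma poly_expand (R : nzRingType) (d : nat) (f : {poly R}) : (size f <= d)%N ->
  f = \sum_(i < d) f`_i *: 'X^i.
Proof.
move=> hs; rewrite -poly_def; apply/polyP => i; rewrite coef_poly.
case: ltnP => // h; rewrite nth_default //; exact: leq_trans hs h.
Qed.

Lemma size_sum_le (R : nzRingType) (I : Type) (s : seq I) (F : I -> {poly R}) d :
  (forall i, (size (F i) <= d)%N) -> (size (\sum_(i <- s) F i)%R <= d)%N.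
Proof.
move=> h; elim: s => [|a s IH]; first by rewrite big_nil size_poly0.
rewrite big_cons; apply: leq_trans (size_polyD _ _) _.
by rewrite geq_max h IH.
Qed.

Section KL.
Context (R : realType) (n r : nat) (hrn : (r <= n)%N).
Local Notation N := (n - r)%N.
Local Notation L j f := (act (@Kop R n r j) f).

Lemma L_D j f g : L j (f + g) = L j f + L j g.
Proof. rewrite !act_Kop // -big_split /=; apply: eq_bigr => k _; by rewrite derivnD mulrDr. Qed.

Lemma L_Z j a f : L j (a *: f) = a *: L j f.
Proof.
rewrite !act_Kop // scaler_sumr; apply: eq_bigr => k _.
by rewrite derivnZ scalerAr.
Qed.

Lemma L_0 j : L j 0 = 0.
Proof. by have := L_Z j 0 0; rewrite !scale0r. Qed.

Lemma L_sum j (I : Type) (s : seq I) (F : I -> {poly R}) :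
  L j (\sum_(i <- s) F i) = \sum_(i <- s) L j (F i).
Proof. exact: (big_morph (fun f => L j f) (L_D j) (L_0 j)). Qed.

Lemma size_L j (f : {poly R}) : (size f <= n.+1)%N -> (size (L j f)%R <= N.+1)%N.
Proof.
move=> hs; rewrite (@poly_expand _ _ _ hs) L_sum; apply: size_sum_le => i.
rewrite L_Z; apply: leq_trans (size_scale_leq _ _) _.
apply: size_Kop_X => //; have := ltn_ord i; lia.
Qed.

Definition fa (a : 'I_r.+1 -> R) : {poly R} := \sum_(i < r.+1) a i *: 'X^(N + i).

Lemma size_fa a : (size (fa a) <= n.+1)%N.
Proof.
apply: size_sum_le => i; apply: leq_trans (size_scale_leq _ _) _.
rewrite size_polyXn; have := ltn_ord i; lia.
Qed.

Lemma coef_L_fa a j : (L j (fa a))`_N = a j * ((N + j) ^_ j)%:R.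
Proof.
rewrite L_sum coef_sum (bigD1 j) //= L_Z coefZ (@coef_Kop_X _ _ _ hrn); last first.
  have := ltn_ord j; lia.
rewrite eqxx big1 ?addr0 // => i ij.
rewrite L_Z coefZ (@coef_Kop_X _ _ _ hrn); last by have := ltn_ord i; lia.
rewrite eqn_add2l; case: eqP => [e|_]; last by rewrite mulr0.
by move: ij; rewrite (val_inj e) eqxx.
Qed.

End KL.

Lemma mmap_eqh (k : nat) (A S : nzRingType) (f : A -> S) (h1 h2 : 'I_k -> S) p :
  h1 =1 h2 -> mmap f h1 p = mmap f h2 p.
Proof. by move=> e; rewrite /mmap; apply: eq_bigr => m _; rewrite (mmap1_eq _ e). Qed.

Section Bij.
Context (R : realType) (n r : nat) (hrn : (r <= n)%N).
Local Notation PR := {poly R}.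
Local Notation O := {mpoly PR[r.+1]}.

Definition lin (A : 'M[PR]_(r.+1)) (j : 'I_r.+1) : O := \sum_i (A i j)%:MP * 'X_i.
Definition sig (A : 'M[PR]_(r.+1)) (p : O) : O := mmap (@mpolyC _ PR) (lin A) p.

Lemma sig_lin A B j : sig A (lin B j) = lin (A *m B) j.
Proof.
rewrite /lin /sig raddf_sum /=.
transitivity (\sum_(i < r.+1) \sum_(l < r.+1) ((B i j * A l i)%:MP * 'X_l : O)).
  apply: eq_bigr => i _; rewrite rmorphM /= mmapC mmapX mmap1U mulr_sumr.
  by apply: eq_bigr => l _; rewrite mulrA -rmorphM.
rewrite [LHS]exchange_big; apply: eq_bigr => l _.
rewrite mxE rmorph_sum mulr_suml; apply: eq_bigr => i _.
by rewrite [A l i * _]mulrC.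
Qed.

Lemma lin1 j : lin 1%:M j = 'X_j.
Proof.
rewrite /lin (bigD1 j) //= mxE eqxx /= mul1r big1 ?addr0 // => i ij.
by rewrite mxE (negbTE ij) mul0r.
Qed.

Lemma sig_comp A B p : A *m B = 1%:M -> sig A (sig B p) = p.
Proof.
move=> AB.
apply: (@mpoly_ext _ _ _ (fun p => sig A (sig B p)) id) => //=.
- by move=> a b; rewrite /sig !rmorphD.
- by rewrite /sig !rmorph0.
- by move=> a b; rewrite /sig !rmorphM.
- by rewrite /sig !rmorph1.
- by move=> c; rewrite /sig !mmapC.
move=> i; rewrite {2}/sig mmapX mmap1U sig_lin AB lin1 //.
Qed.

Definition aK (i j : nat) : PR :=
  if (j <= i)%N then wk R n r j (i - j) *: 'X^(i - j) else 0.
Definition AK : 'M[PR]_(r.+1) := \matrix_(i, j) aK i j.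

Lemma Kop_lin j : @Kop R n r j = lin AK j.
Proof.
rewrite /lin /Kop.
rewrite [RHS](eq_bigr (fun i : 'I_r.+1 => (AK (inord i) j)%:MP * 'X_(inord i))); last first.
  by move=> i _; rewrite inord_val.
rewrite -(big_mkord (fun _ => true) (fun i => (AK (inord i) j)%:MP * 'X_(inord i))).
rewrite (@big_cat_nat _ _ _ j 0 r.+1) /=; last (by have := ltn_ord j; lia); last done.
rewrite [X in _ = X + _]big_nat_cond [X in _ = X + _]big1 ?add0r; last first.
  move=> i /andP [/andP [_ hi] _]; rewrite mxE inordK; last first.
    by have := ltn_ord j; lia.
  by rewrite /aK leqNgt hi /= mul0r.
have e := @big_addn _ 0 +%R 0 r.+1 j (fun _ => true) (fun i => (AK (inord i) j)%:MP * 'X_(inord i) : O).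
rewrite /= in e; rewrite e.
have -> : (r.+1 - j = (r - j).+1)%N by have := ltn_ord j; lia.
rewrite big_mkord; apply: eq_bigr => k _.
rewrite mxE inordK; last by have := ltn_ord k; have := ltn_ord j; lia.
by rewrite /aK leq_addl addnK.
Qed.

Lemma AK_unit : AK \in unitmx.
Proof.
rewrite unitmxE det_trig; last first.
  apply/is_trig_mxP => i j ij; rewrite mxE /aK leqNgt ij //.
apply: (big_ind (fun x : PR => x \is a GRing.unit)); first exact: unitr1.
  by move=> x y; rewrite unitrM => -> ->.
move=> i _; rewrite mxE /aK leqnn subnn expr0 poly_unitE.
rewrite -mul_polyC mulr1 size_polyC coefC /= unitfE /wk.
have h : wk R n r i 0 != 0.
  rewrite /wk expr0 mul1r fact0 divr1 subn0 pnatr_eq0 -lt0n bin_gt0.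
  by have := ltn_ord i; lia.
by rewrite /wk in h; rewrite h.
Qed.

Lemma Kexpand_sig Q : Kexpand n Q = sig AK Q.
Proof. by rewrite /Kexpand /sig; apply: mmap_eqh => j; rewrite Kop_lin. Qed.

Lemma Kexpand_bij (T : O) : exists! Q : O, T = Kexpand n Q.
Proof.
have AB : AK *m invmx AK = 1%:M by rewrite mulmxV // AK_unit.
have BA : invmx AK *m AK = 1%:M by rewrite mulVmx // AK_unit.
exists (sig (invmx AK) T); split.
  by rewrite Kexpand_sig sig_comp.
by move=> Q ->; rewrite Kexpand_sig sig_comp.
Qed.
End Bij.

Section Top.
Context (K : comNzRingType).

Lemma topM (a b : {poly K}) (A B : nat) :
  (size a <= A.+1)%N -> (size b <= B.+1)%N ->
  (size (a * b)%R <= (A + B).+1)%N /\ (a * b)`_(A + B) = a`_A * b`_B.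
Proof.
move=> ha hb; split.
  apply: leq_trans (size_polyMleq _ _) _; lia.
have hA : (A < (A + B).+1)%N by lia.
rewrite coefM (bigD1 (Ordinal hA)) //= (_ : A + B - A = B)%N; last lia.
rewrite big1 ?addr0 // => i /eqP ne.
case: (ltngtP i A) => h.
- rewrite [b`__]nth_default ?mulr0 //; apply: leq_trans hb _.
  have := ltn_ord i; lia.
- by rewrite nth_default ?mul0r //; apply: leq_trans ha h.
- by case: ne; apply: val_inj.
Qed.

Lemma topX (g : {poly K}) (D e : nat) : (size g <= D.+1)%N ->
  (size (g ^+ e) <= (e * D).+1)%N /\ (g ^+ e)`_(e * D) = g`_D ^+ e.
Proof.
move=> hg; elim: e => [|e [IH1 IH2]].
  by rewrite !expr0 mul0n size_poly1 coefC.
have [h1 h2] := topM _ _ _ _ hg IH1.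
by rewrite exprS mulSn; split => //; rewrite h2 IH2 exprS.
Qed.

Lemma topP (I : Type) (s : seq I) (F : I -> {poly K}) (d : I -> nat) :
  (forall i, (size (F i) <= (d i).+1)%N) ->
  (size (\prod_(i <- s) F i)%R <= (\sum_(i <- s) d i).+1)%N /\
  (\prod_(i <- s) F i)`_(\sum_(i <- s) d i) = \prod_(i <- s) (F i)`_(d i).
Proof.
move=> h; elim: s => [|a s [IH1 IH2]].
  by rewrite !big_nil size_poly1 coefC.
have [h1 h2] := topM _ _ _ _ (h a) IH1.
by rewrite !big_cons; split => //; rewrite h2 IH2.
Qed.

Lemma coef_big (a : {poly K}) (D : nat) : (size a <= D)%N -> a`_D = 0.
Proof. by move=> h; rewrite nth_default. Qed.
End Top.

Lemma bigmax_ex (I : eqType) (s : seq I) (F : I -> nat) : s != [::] ->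
  exists2 x, x \in s & F x = \max_(i <- s) F i.
Proof.
elim: s => [//|a s IH] _.
rewrite big_cons; case: (eqVneq s [::]) => [->|ns].
  by exists a; rewrite ?mem_seq1 // big_nil maxn0.
have [x xs ex] := IH ns.
case: (leqP (F a) (\max_(i <- s) F i)) => h.
  by exists x; rewrite ?inE ?xs ?orbT // -ex (maxn_idPr _) // ex.
by exists a; rewrite ?inE ?eqxx // (maxn_idPl _) // ltnW.
Qed.

Lemma Pspace_iff (R : realType) (n r : nat) (hrn : (r <= n)%N) (q : {poly R}) (d : nat) :
  Pspace ((d%:Z) * r%:Z - (d%:Z - 1) * n%:Z) q <->
  (q = 0 \/ ((size q).-1 + d * (n - r) <= n)%N).
Proof.
have e : (d%:Z * r%:Z - (d%:Z - 1) * n%:Z = n%:Z - (d * (n - r))%:Z)%R.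
  by rewrite PoszM -(subzn hrn); ring.
rewrite /Pspace e.
case: (leqP (d * (n - r)) n) => h.
  have -> : (n%:Z - (d * (n - r))%:Z < 0) = false by apply/negbTE; lia.
  have -> : `|n%:Z - (d * (n - r))%:Z|%N = (n - d * (n - r))%N by lia.
  split.
    move=> hs; case: (eqVneq q 0) => [->|nq]; [by left | right]; lia.
  case=> [->|hs]; first by rewrite size_poly0.
  move: hs; case: (size q) => //= k; lia.
have -> : (n%:Z - (d * (n - r))%:Z < 0) = true by apply/idP; lia.
split; [by left | case=> // hs; lia].
Qed.

Section Main.
Context (R : realType) (n r : nat) (hrn : (r <= n)%N).
Local Notation N := (n - r)%N.
Local Notation O := {mpoly {poly R}[r.+1]}.
Local Notation g f := (fun j : 'I_r.+1 => act (@Kop R n r j) f).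

Lemma act_Kexpand (Q : O) f : act (Kexpand n Q) f = mmap idfun (g f) Q.
Proof.
apply: (@mpoly_ext _ _ _ (fun Q => act (Kexpand n Q) f) (mmap idfun (g f))) => //=.
- by move=> a b; rewrite /Kexpand rmorphD actD.
- by move=> a b; rewrite rmorphD.
- by rewrite /Kexpand rmorph0 act0.
- by rewrite rmorph0.
- by move=> a b; rewrite /Kexpand rmorphM actM.
- by move=> a b; rewrite rmorphM.
- by rewrite /Kexpand rmorph1 act1.
- by rewrite rmorph1.
- by move=> c; rewrite /Kexpand mmapC actC mmapC.
by move=> i; rewrite /Kexpand !mmapX !mmap1U.
Qed.

Lemma actT_sum (Q : O) f :
  act (Kexpand n Q) f = \sum_(m <- msupp Q) Q@_m * mmap1 (g f) m.
Proof. by rewrite act_Kexpand. Qed.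

Lemma G_top (f : {poly R}) (m : 'X_{1..r.+1}) : (size f <= n.+1)%N ->
  (size (mmap1 (g f) m) <= (mdeg m * N).+1)%N /\
  (mmap1 (g f) m)`_(mdeg m * N) = \prod_(i < r.+1) ((g f i)`_N) ^+ m i.
Proof.
move=> hf.
have e : (mdeg m * N = \sum_(i < r.+1) (m i * N))%N by rewrite mdegE big_distrl.
rewrite e /mmap1.
have [h1 h2] := @topP _ _ (index_enum 'I_r.+1) (fun i => g f i ^+ m i) (fun i => m i * N)%N
   (fun i => proj1 (@topX _ _ _ (m i) (@size_L _ _ _ hrn i _ hf))).
split => //; rewrite h2; apply: eq_bigr => i _.
exact: (proj2 (@topX _ _ _ (m i) (@size_L _ _ _ hrn i _ hf))).
Qed.

Lemma PspaceN (p : {poly R}) : Pspace n%:Z p <-> (size p <= n.+1)%N.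
Proof.
rewrite /Pspace; have -> : (n%:Z < 0) = false by lia.
by rewrite absz_nat.
Qed.

Lemma suff_dir (Q : O) :
  (forall m, Q@_m = 0 \/ ((size Q@_m).-1 + mdeg m * N <= n)%N) ->
  preserves n (Kexpand n Q).
Proof.
move=> h f /PspaceN hf; apply/PspaceN; rewrite actT_sum.
apply: size_sum_le => m.
case: (h m) => [->|hm]; first by rewrite mul0r size_poly0.
have [h1 _] := G_top f m hf.
have [h2 _] := @topM _ _ _ ((size Q@_m).-1) _ (leqSpred _) h1.
by apply: leq_trans h2 _.
Qed.

Lemma nec_dir (Q : O) : preserves n (Kexpand n Q) ->
  forall m, Q@_m = 0 \/ ((size Q@_m).-1 + mdeg m * N <= n)%N.
Proof.
move=> hp m0; case: (eqVneq Q@_m0 0) => [->|nz0]; [by left | right].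
rewrite leqNgt; apply/negP => hbig.
pose d (m : 'X_{1..r.+1}) := ((size Q@_m).-1 + mdeg m * N)%N.
pose D := \max_(m <- msupp Q) d m.
have m0s : m0 \in msupp Q by rewrite mcoeff_msupp.
have hD : (n < D)%N.
  by apply: leq_trans hbig _; apply: (@leq_bigmax_seq _ _ xpredT d m0 m0s).
have hle m : m \in msupp Q -> (d m <= D)%N.
  by move=> ms; apply: (@leq_bigmax_seq _ _ xpredT d m ms).
have [ms mss eD] : exists2 x, x \in msupp Q & d x = D.
  apply: bigmax_ex; apply/eqP => e; by rewrite e in m0s.
pose Pp : {mpoly R[r.+1]} := \sum_(m <- msupp Q | d m == D) lead_coef Q@_m *: 'X_[m].
have Pnz : Pp != 0.
  apply/eqP => /(congr1 (mcoeff ms)); rewrite raddf_sum /= mcoeff0.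
  rewrite big_mkcond (bigD1_seq ms) ?msupp_uniq //= eD eqxx mcoeffZ mcoeffX eqxx mulr1.
  rewrite big1 ?addr0.
    by move=> /eqP; rewrite lead_coef_eq0; apply/negP; rewrite -mcoeff_msupp.
  move=> m ne; case: ifP => _ //.
  by rewrite mcoeffZ mcoeffX (negbTE ne) mulr0.
apply: (negP Pnz); apply/eqP; apply: mpoly_nz => v; apply/eqP/negPn/negP => hv.
pose a := fun j : 'I_r.+1 => v j / ((N + j) ^_ j)%:R.
pose f := fa R n r a.
have hf : (size f <= n.+1)%N by apply: size_fa.
have hTf := hp f (proj2 (PspaceN f) hf).
move/PspaceN: hTf => hTf.
have gN j : (g f j)`_N = v j.
  rewrite /f (@coef_L_fa _ _ _ hrn) /a divfK // pnatr_eq0 -lt0n ffact_gt0 leq_addl //.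
have: (act (Kexpand n Q) f)`_D = Pp.@[v].
  rewrite actT_sum coef_sum /Pp (big_morph (meval v) (mevalD v) (meval0 v)).
  rewrite [RHS]big_mkcond /=; apply: eq_bigr => m _.
  case: ifP => [/eqP hdm|hdm].
    rewrite mevalZ mevalX.
    have [h1 h2] := G_top f m hf.
    have [_ h3] := @topM _ _ _ ((size Q@_m).-1) _ (leqSpred _) h1.
    rewrite -hdm /d h3 h2 -lead_coefE; congr (_ * _).
    by apply: eq_bigr => i _; rewrite gN.
  case: (boolP (m \in msupp Q)) => mq; last first.
    by rewrite (memN_msupp_eq0 mq) mul0r coef0.
  have [h1 _] := G_top f m hf.
  have [h2 _] := @topM _ _ _ ((size Q@_m).-1) _ (leqSpred _) h1.
  rewrite nth_default //; apply: leq_trans h2 _.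
  have := hle m mq; move: hdm => /negbT; rewrite /d => hdm.
  by rewrite ltn_neqAle hdm.
rewrite nth_default; last by apply: leq_trans hTf _.
by move=> e; move: hv; rewrite -e eqxx.
Qed.

End Main.

Theorem mainTheorem3 (R : realType) (n r : nat) (hrn : (r <= n)%N)
  (T : operator R r) :
  (exists! Q : {mpoly {poly R}[r.+1]}, T = Kexpand n Q) /\
  (forall Q : {mpoly {poly R}[r.+1]}, T = Kexpand n Q ->
     (preserves n T <->
      forall m : 'X_{1..r.+1},
        Pspace ((mdeg m)%:Z * r%:Z - ((mdeg m)%:Z - 1) * n%:Z) (Q@_m))).
Proof.
split; first exact: (@Kexpand_bij R n r hrn T).
move=> Q ->; split.
- move=> hp m; apply/(@Pspace_iff R n r hrn); exact: (@nec_dir R n r hrn Q hp m).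
- move=> h; apply: (@suff_dir R n r hrn Q) => m; apply/(@Pspace_iff R n r hrn); exact: h.
Qed.
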